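(* Let $F$, $H$, $X$, $\Omega$, $Q$ and the sequences generated by the IneIREG method be as described in the context. Suppose $\eta_k\equiv\eta>0$ for all $k\ge0$; $\alpha_0\in[0,1]$ and $(\alpha_k)_{k\ge0}$ is nonincreasing; $\lambda_k\in[\underline\lambda,\overline\lambda]$ for all $k\ge0$ with $0<\underline\lambda\le\overline\lambda\le1/(L_F+\eta L_H)$; and $\hat s:=\sum_{k=0}^\infty\delta_k<+\infty$. For $k\ge1$ let $\Lambda_k=\sum_{j=0}^{k-1}\lambda_j$ and $\overline y_k=\Lambda_k^{-1}\sum_{j=0}^{k-1}\lambda_jy_j$. Then: (a) for all $k\ge1$, $-B_H\,\mathrm{dist}(\overline y_k,Q)\le\mathrm{Gap}(\overline y_k,H,Q)\le \frac1k\Big(\frac{D_X^2+\hat s}{2\underline\lambda\eta}\Big)$; (b) for all $k\ge1$, $0\le\mathrm{Gap}(\overline y_k,F,X)\le\frac1k\Big(\frac{D_X^2+\hat s}{2\underline\lambda}\Big)+\eta\Big(\frac{\overline\lambda C_HD_X}{\underline\lambda}\Big)$; (c) if $Q$ is $\sigma$-weakly sharp of order $\mathcal M\ge1$, then for all $k\ge1$, $\mathrm{Gap}(\overline y_k,H,Q)\ge-\frac{B_H}{\sigma^{1/\mathcal M}}\Big(\frac1k\Big(\frac{D_X^2+\hat s}{2\underline\lambda}\Big)+\eta\Big(\frac{\overline\lambda C_HD_X}{\underline\lambda}\Big)\Big)^{1/\mathcal M}$.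
   Context: Work in $\mathbb{R}^n$ with Euclidean inner product $\langle\cdot,\cdot\rangle$ and norm $\|\cdot\|$. The maps $F\colon \mathrm{Dom}\,F\to\mathbb{R}^n$ and $H\colon\mathrm{Dom}\,H\to\mathbb{R}^n$ are monotone and Lipschitz continuous with constants $L_F>0$ and $L_H>0$. $X$ is a nonempty compact convex set and $\Omega$ a nonempty closed convex set with $X\subset\Omega\subset\mathrm{Dom}\,F\cap\mathrm{Dom}\,H$; $P_X,P_\Omega$ denote orthogonal projections. $Q:=\{x\in X:\langle F(x),y-x\rangle\ge0\ \forall y\in X\}$ is assumed nonempty. $D_X:=\sup_{x,y\in X}\|x-y\|$, $C_H:=\sup_{x\in X}\|H(x)\|$, $B_H:=\sup_{x\in Q}\|H(x)\|$, $\mathrm{dist}(y,Q)$ is the Euclidean distance to $Q$. $\mathrm{Gap}(z,H,Q):=\sup_{x\in Q}\langle H(x),z-x\rangle$, $\mathrm{Gap}(z,F,X):=\sup_{x\in X}\langle F(x),z-x\rangle$. $Q$ is $\sigma$-weakly sharp of order $\mathcal M\ge1$ ($\sigma>0$) if $\langle F(x),y-x\rangle\ge\sigma\,\mathrm{dist}(y,Q)^{\mathcal M}$ for all $x\in Q$, $y\in X$. IneIREG method: start with $x_0=x_{-1}\in X$; for $k=0,1,\dots$, with parameters $\alpha_k\ge0$, $\lambda_k>0$, $\eta_k>0$, set $w_k=x_k+\alpha_k(x_k-x_{k-1})$, $w'_k=P_\Omega(w_k)$, $y_k=P_X\big(w_k-\lambda_k(F(w'_k)+\eta_kH(w'_k))\big)$,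 $x_{k+1}=P_X\big(w_k-\lambda_k(F(y_k)+\eta_kH(y_k))\big)$. Also $\delta_k:=\alpha_k(1+\alpha_k)\|x_k-x_{k-1}\|^2$ for $k\ge0$. *)

(* Defs.v *)
From HB Require Import structures.
From mathcomp Require Import all_boot all_order all_algebra.
From mathcomp Require Import all_classical all_reals all_analysis.
Set Implicit Arguments. Unset Strict Implicit. Unset Printing Implicit Defensive.
Import Order.TTheory GRing.Theory Num.Theory.
Import numFieldNormedType.Exports.
Local Open Scope classical_set_scope.
Local Open Scope ring_scope.

Section Euclid.
Variables (R : realType) (n : nat).
Notation V := 'rV[R]_n.

Definition dot (u v : V) : R := \sum_(i < n) u 0 i * v 0 i.
Definition enorm (u : V) : R := Num.sqrt (dot u u).

Definition convex_subset (C : set V) : Prop :=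
  forall x y, C x -> C y -> forall t : R, 0 <= t <= 1 -> C (t *: x + (1 - t) *: y).

Definition is_projection (C : set V) (P : V -> V) : Prop :=
  forall z, C (P z) /\ forall y, C y -> enorm (z - P z) <= enorm (z - y).

Definition monotone_map_on (D : set V) (F : V -> V) : Prop :=
  forall x y, D x -> D y -> 0 <= dot (F x - F y) (x - y).

Definition lipschitz_map_on (D : set V) (F : V -> V) (L : R) : Prop :=
  forall x y, D x -> D y -> enorm (F x - F y) <= L * enorm (x - y).

Definition VIsol (F : V -> V) (X : set V) : set V :=
  [set x | X x /\ forall y, X y -> 0 <= dot (F x) (y - x)].

Definition set_diam (X : set V) : R := sup [set enorm (x - y) | x in X & y in X].
Definition sup_norm (H : V -> V) (S : set V) : R := sup [set enorm (H x) | x in S].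
Definition set_dist (y : V) (Q : set V) : R := inf [set enorm (y - x) | x in Q].
Definition Gap (z : V) (H : V -> V) (Q : set V) : R :=
  sup [set dot (H x) (z - x) | x in Q].

Definition weakly_sharp (F : V -> V) (X Q : set V) (sigma M : R) : Prop :=
  forall x y, Q x -> X y -> sigma * (set_dist y Q) `^ M <= dot (F x) (y - x).
End Euclid.

(* Main.v *)
Require Import Defs.
From HB Require Import structures.
From mathcomp Require Import all_boot all_order all_algebra.
From mathcomp Require Import all_classical all_reals all_analysis.
From mathcomp Require Import ring lra.
Import Order.TTheory GRing.Theory Num.Theory.
Import numFieldNormedType.Exports.
Local Open Scope classical_set_scope.
Local Open Scope ring_scope.

Lemma dotC {R : realType} {n} (u v : 'rV[R]_n) : dot u v = dot v u.
Proof. by rewrite /dot; apply: eq_bigr => i _; rewrite mulrC. Qed.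

Lemma dotDl {R : realType} {n} (u v w : 'rV[R]_n) : dot (u + v) w = dot u w + dot v w.
Proof. by rewrite /dot -big_split; apply: eq_bigr => i _; rewrite mxE mulrDl. Qed.

Lemma dotDr {R : realType} {n} (u v w : 'rV[R]_n) : dot w (u + v) = dot w u + dot w v.
Proof. by rewrite dotC dotDl !(dotC w). Qed.

Lemma dotZl {R : realType} {n} (a : R) (u w : 'rV[R]_n) : dot (a *: u) w = a * dot u w.
Proof. by rewrite /dot mulr_sumr; apply: eq_bigr => i _; rewrite mxE mulrA. Qed.

Lemma dotZr {R : realType} {n} (a : R) (u w : 'rV[R]_n) : dot w (a *: u) = a * dot w u.
Proof. by rewrite dotC dotZl dotC. Qed.

Lemma dotNl {R : realType} {n} (u w : 'rV[R]_n) : dot (- u) w = - dot u w.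
Proof. by rewrite -scaleN1r dotZl mulN1r. Qed.

Lemma dotNr {R : realType} {n} (u w : 'rV[R]_n) : dot w (- u) = - dot w u.
Proof. by rewrite dotC dotNl dotC. Qed.

Lemma dot0l {R : realType} {n} (w : 'rV[R]_n) : dot 0 w = 0.
Proof. by rewrite /dot big1 // => i _; rewrite mxE mul0r. Qed.

Lemma dot0r {R : realType} {n} (w : 'rV[R]_n) : dot w 0 = 0.
Proof. by rewrite dotC dot0l. Qed.

Lemma dot_sumr {R : realType} {n} (w : 'rV[R]_n) k (f : nat -> 'rV[R]_n) :
  dot w (\sum_(j < k) f j) = \sum_(j < k) dot w (f j).
Proof.
elim: k => [|k IH]; first by rewrite !big_ord0 dot0r.
by rewrite !big_ord_recr /= dotDr IH.
Qed.

Lemma dot_ge0 {R : realType} {n} (u : 'rV[R]_n) : 0 <= dot u u.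
Proof. by rewrite /dot; apply: sumr_ge0 => i _; rewrite -expr2 sqr_ge0. Qed.

Lemma dot_eq0 {R : realType} {n} (u : 'rV[R]_n) : dot u u = 0 -> u = 0.
Proof.
move=> /eqP; rewrite /dot psumr_eq0 => [/allP H|i _]; last by rewrite -expr2 sqr_ge0.
apply/rowP => i; rewrite mxE; apply/eqP.
by have := H i (mem_index_enum _); rewrite -expr2 sqrf_eq0.
Qed.

Lemma enorm_ge0 {R : realType} {n} (u : 'rV[R]_n) : 0 <= enorm u.
Proof. exact: sqrtr_ge0. Qed.

Lemma enorm_sq {R : realType} {n} (u : 'rV[R]_n) : enorm u ^+ 2 = dot u u.
Proof. by rewrite /enorm sqr_sqrtr // dot_ge0. Qed.

Lemma enorm_le {R : realType} {n} (u v : 'rV[R]_n) :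
  (enorm u <= enorm v) = (dot u u <= dot v v).
Proof. by rewrite /enorm ler_sqrt // dot_ge0. Qed.

Lemma enorm_sqle {R : realType} {n} (u : 'rV[R]_n) (c : R) :
  0 <= c -> enorm u <= c -> dot u u <= c ^+ 2.
Proof.
move=> c0 h; rewrite -enorm_sq; apply: lerXn2r => //; rewrite ?nnegrE //.
exact: enorm_ge0.
Qed.

Lemma CS {R : realType} {n} (u v : 'rV[R]_n) : dot u v <= enorm u * enorm v.
Proof.
have [u0|] := eqVneq (enorm u) 0.
  have : dot u u = 0 by rewrite -enorm_sq u0 expr0n.
  by move/dot_eq0 ->; rewrite dot0l mulr_ge0 // enorm_ge0.
have [v0|vn un] := eqVneq (enorm v) 0.
  have : dot v v = 0 by rewrite -enorm_sq v0 expr0n.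
  by move/dot_eq0 ->; rewrite dot0r mulr_ge0 // enorm_ge0.
set a := enorm u; set b := enorm v.
have a0 : 0 < a by rewrite lt_def un enorm_ge0.
have b0 : 0 < b by rewrite lt_def vn enorm_ge0.
have := dot_ge0 (b *: u - a *: v).
rewrite !(dotDl, dotDr, dotNl, dotNr, dotZl, dotZr) -!enorm_sq -/a -/b (dotC v u).
move=> h.
have : 0 <= a * b * (2 * (a * b - dot u v)) by nra.
rewrite pmulr_rge0 ?mulr_gt0 //; lra.
Qed.

Lemma CSN {R : realType} {n} (u v : 'rV[R]_n) : - (enorm u * enorm v) <= dot u v.
Proof.
have := CS (- u) v; rewrite dotNl.
have -> : enorm (- u) = enorm u by rewrite /enorm dotNl dotNr opprK.
lra.
Qed.

Lemma enorm_triangle {R : realType} {n} (u v : 'rV[R]_n) :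
  enorm (u + v) <= enorm u + enorm v.
Proof.
have h1 : 0 <= enorm u + enorm v by apply: addr_ge0; apply: enorm_ge0.
rewrite -(ler_pXn2r (n:=2)) ?nnegrE ?enorm_ge0 //.
rewrite enorm_sq !(dotDl, dotDr) (dotC v u) sqrrD !enorm_sq.
have := CS u v; lra.
Qed.

Lemma enormZ {R : realType} {n} (a : R) (u : 'rV[R]_n) : enorm (a *: u) = `|a| * enorm u.
Proof.
by rewrite /enorm dotZl dotZr mulrA -expr2 sqrtrM ?sqr_ge0 // sqrtr_sqr.
Qed.


Lemma vi_aux {R : realType} {n} (d e : 'rV[R]_n) :
  (forall t : R, 0 < t -> t <= 1 -> dot d d <= dot (d - t *: e) (d - t *: e)) ->
  dot d e <= 0.
Proof.
move=> H.
have key : forall t, 0 < t -> t <= 1 -> 2 * dot d e <= t * dot e e.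
  move=> t t0 t1; have := H t t0 t1.
  rewrite !(dotDl, dotDr, dotNl, dotNr, dotZl, dotZr) (dotC e d) => h.
  have : t * (2 * dot d e) <= t * (t * dot e e) by lra.
  by rewrite ler_pM2l.
rewrite leNgt; apply/negP => a0.
have c0 := dot_ge0 e.
move: a0 c0 key; set a := dot d e; set c := dot e e => a0 c0 key.
have ac : 0 < a + c by rewrite ltr_wpDr.
have t0 : 0 < a / (a + c) by rewrite divr_gt0.
have t1 : a / (a + c) <= 1 by rewrite ler_pdivrMr // mul1r lerDl.
have := key _ t0 t1.
have : a / (a + c) * c <= a.
  rewrite mulrAC ler_pdivrMr // ; nra.
lra.
Qed.

Lemma proj_vi {R : realType} {n} (C : set 'rV[R]_n) P z y :
  is_projection C P -> convex_subset C -> C y ->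
  dot (z - P z) (y - P z) <= 0.
Proof.
move=> hP hC Cy; have [CP hmin] := hP z.
apply: vi_aux => t t0 t1.
have := hmin _ (hC y (P z) Cy CP t (andb_true_intro (conj (ltW t0) t1))).
rewrite enorm_le.
have -> : z - (t *: y + (1 - t) *: P z) = z - P z - t *: (y - P z).
  by rewrite scalerBr scalerBl scale1r; apply/rowP => i; rewrite !mxE; ring.
by [].
Qed.

Lemma proj_nonexp {R : realType} {n} (C : set 'rV[R]_n) P z y :
  is_projection C P -> convex_subset C -> C y ->
  dot (y - P z) (y - P z) <= dot (y - z) (y - z).
Proof.
move=> hP hC Cy; have := proj_vi C P z y hP hC Cy.
have -> : y - z = (y - P z) - (z - P z) by rewrite opprB addrA subrK.
move: (y - P z) (z - P z) => a b.
rewrite !(dotDl, dotDr, dotNl, dotNr) (dotC a b); have := dot_ge0 b; lra.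
Qed.


Ltac dexp := rewrite !(dotDl, dotDr, dotNl, dotNr, dotZl, dotZr).

Lemma eg_alg {R : realType} {n} (a b c g h : 'rV[R]_n) (lam : R) :
  dot (a - b - lam *: g) (- (b + c)) <= 0 ->
  dot (a - lam *: h) b <= 0 ->
  lam ^+ 2 * dot (h - g) (h - g) <= dot a a ->
  dot (b + c) (b + c) <= dot (a + c) (a + c) - 2 * lam * dot g c.
Proof.
have Y := dot_ge0 (lam *: (h - g) - b).
move: Y; dexp.
rewrite ?(dotC b a) ?(dotC c a) ?(dotC g a) ?(dotC h a) ?(dotC c b) ?(dotC g b)
  ?(dotC h b) ?(dotC g c) ?(dotC h c) ?(dotC h g).
move=> Y h1 h2 h3. nra.
Qed.

Lemma eg_step {R : realType} {n} (X Om : set 'rV[R]_n) PX POm (G : 'rV[R]_n -> 'rV[R]_n)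
  (lam : R) u x :
  is_projection X PX -> convex_subset X -> is_projection Om POm -> convex_subset Om ->
  X `<=` Om ->
  (forall a b, Om a -> Om b -> lam ^+ 2 * dot (G a - G b) (G a - G b) <= dot (a - b) (a - b)) ->
  X x ->
  dot (PX (u - lam *: G (PX (u - lam *: G (POm u)))) - x)
      (PX (u - lam *: G (PX (u - lam *: G (POm u)))) - x)
  <= dot (u - x) (u - x)
     - 2 * lam * dot (G (PX (u - lam *: G (POm u)))) (PX (u - lam *: G (POm u)) - x).
Proof.
move=> hX cX hO cO XO Lip Xx.
set u' := POm u. set y := PX (u - lam *: G u'). set xp := PX (u - lam *: G y).
have Xy : X y by case: (hX (u - lam *: G u')).
have Xxp : X xp by case: (hX (u - lam *: G y)).
have Ou' : Om u' by case: (hO u).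
have VI1 := proj_vi X PX (u - lam *: G y) x hX cX Xx.
have VI2 := proj_vi X PX (u - lam *: G u') xp hX cX Xxp.
have NE := proj_nonexp Om POm u y hO cO (XO _ Xy).
have L := Lip u' y Ou' (XO _ Xy).
have E1 : u - x = (u - y) + (y - x) by rewrite addrA subrK.
have E2 : xp - x = (xp - y) + (y - x) by rewrite addrA subrK.
rewrite E1 E2; apply: (eg_alg _ _ _ _ (G u')).
- have -> : u - y - (xp - y) - lam *: G y = u - lam *: G y - xp.
    by apply/rowP => i; rewrite !mxE; ring.
  have -> : - (xp - y + (y - x)) = x - xp by apply/rowP => i; rewrite !mxE; ring.
  exact: VI1.
- have -> : u - y - lam *: G u' = u - lam *: G u' - y.
    by apply/rowP => i; rewrite !mxE; ring.
  exact: VI2.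
- apply: le_trans L _.
  have -> : u' - y = - (y - u') by rewrite opprB.
  rewrite dotNl dotNr opprK; apply: le_trans NE _.
  have -> : y - u = - (u - y) by rewrite opprB.
  by rewrite dotNl dotNr opprK.
Qed.


Lemma sup_ge_elt {R : realType} (S : set R) b z :
  (forall y, S y -> y <= b) -> S z -> z <= sup S.
Proof. by move=> hb Sz; apply: ub_le_sup => //; exists b. Qed.

Lemma sup_le_b {R : realType} (S : set R) b :
  S !=set0 -> (forall y, S y -> y <= b) -> sup S <= b.
Proof. by move=> ne hb; apply: ge_sup. Qed.

Lemma compact_enorm_bound {R : realType} {n} (X : set 'rV[R]_n) :
  compact X -> exists B, forall x, X x -> enorm x <= B.
Proof.
move=> cX; have [M [_ hM]] := compact_bounded cX.
exists (Num.sqrt (n%:R * (M + 1) ^+ 2)) => v Xv.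
have nv : `|v| <= M + 1 by apply: (hM (M + 1)); [rewrite ltrDl | ].
have ent : forall i, `|v ord0 i| <= M + 1.
  move=> i; apply: le_trans nv.
  have /mapP[j Hj ->] : `|v ord0 i| \in [seq `|v x.1 x.2| | x : 'I_1 * 'I_n].
    by apply/mapP; exists (ord0, i) => //=; rewrite mem_enum.
  by rewrite (_ : `|v| = mx_norm v) // mx_normrE; apply/bigmax_geP; right => /=; exists j.
rewrite /enorm ler_wsqrtr //.
have -> : n%:R * (M + 1) ^+ 2 = \sum_(i < n) (M + 1) ^+ 2.
  by rewrite sumr_const card_ord mulr_natl.
rewrite /dot; apply: ler_sum => i _.
have := ent i; rewrite ler_norml => /andP[h1 h2].
have : v 0 i = v ord0 i by [].
move=> ->; nra.
Qed.

Lemma diam_bound {R : realType} {n} (X : set 'rV[R]_n) a b :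
  compact X -> X a -> X b -> enorm (a - b) <= set_diam X.
Proof.
move=> cX Xa Xb; have [B hB] := compact_enorm_bound X cX.
apply: (@sup_ge_elt _ _ (B + B)); last by exists a => //; exists b.
move=> _ [x Xx [y Xy <-]].
apply: le_trans (enorm_triangle _ _) _.
apply: lerD; first exact: hB.
have -> : enorm (- y) = enorm y by rewrite /enorm dotNl dotNr opprK.
exact: hB.
Qed.

Lemma diam_ge0 {R : realType} {n} (X : set 'rV[R]_n) :
  compact X -> X !=set0 -> 0 <= set_diam X.
Proof.
move=> cX [a Xa]; apply: le_trans (diam_bound X a a cX Xa Xa); exact: enorm_ge0.
Qed.

Lemma supnorm_bound {R : realType} {n} (H : 'rV[R]_n -> 'rV[R]_n) (S : set 'rV[R]_n) c z :
  (forall x, S x -> enorm (H x) <= c) -> S z -> enorm (H z) <= sup_norm H S.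
Proof. move=> hc Sz; apply: (@sup_ge_elt _ _ c); last by exists z. by move=> _ [x Sx <-]; apply: hc. Qed.

Lemma supnorm_ge0 {R : realType} {n} (H : 'rV[R]_n -> 'rV[R]_n) (S : set 'rV[R]_n) c :
  (forall x, S x -> enorm (H x) <= c) -> S !=set0 -> 0 <= sup_norm H S.
Proof. move=> hc [z Sz]; apply: (le_trans (enorm_ge0 (H z))); exact: (supnorm_bound H S c z hc Sz). Qed.

Lemma dist_ge0 {R : realType} {n} (y : 'rV[R]_n) Q : Q !=set0 -> 0 <= set_dist y Q.
Proof.
move=> [q Qq]; apply: lb_le_inf; first by exists (enorm (y - q)); exists q.
by move=> _ [x _ <-]; apply: enorm_ge0.
Qed.

Lemma dist_lb {R : realType} {n} (y : 'rV[R]_n) Q (B g : R) :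
  Q !=set0 -> 0 <= B -> (forall q, Q q -> - B * enorm (y - q) <= g) ->
  - B * set_dist y Q <= g.
Proof.
move=> [q Qq] B0 h.
have [Be|Bn] := eqVneq B 0.
  by have := h q Qq; rewrite Be oppr0 !mul0r.
have Bp : 0 < B by rewrite lt_def Bn B0.
have : - g / B <= set_dist y Q.
  apply: lb_le_inf; first by exists (enorm (y - q)); exists q.
  move=> _ [x Qx <-]; rewrite ler_pdivrMr //; have := h x Qx; lra.
rewrite ler_pdivrMr // => h2; lra.
Qed.


Lemma inertial_id {R : realType} {n} (xk xk1 z : 'rV[R]_n) (a : R) :
  dot (xk + a *: (xk - xk1) - z) (xk + a *: (xk - xk1) - z) =
  (1 + a) * dot (xk - z) (xk - z) - a * dot (xk1 - z) (xk1 - z)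
  + a * (1 + a) * dot (xk - xk1) (xk - xk1).
Proof.
have E1 : xk + a *: (xk - xk1) - z = (xk - z) + a *: ((xk - z) - (xk1 - z)).
  by apply/rowP => i; rewrite !mxE; ring.
have E2 : xk - xk1 = (xk - z) - (xk1 - z).
  by apply/rowP => i; rewrite !mxE; ring.
rewrite E1 E2; move: (xk - z) (xk1 - z) => p q.
rewrite !(dotDl, dotDr, dotNl, dotNr, dotZl, dotZr) (dotC q p); ring.
Qed.

Lemma sum_bound {R : realType} (phi alpha delta s : nat -> R) (D2 : R) :
  (forall k, 0 <= phi k <= D2) -> (forall k, 0 <= alpha k) -> alpha 0 <= 1 ->
  (forall k, alpha k.+1 <= alpha k) ->
  (forall k, phi k.+1 <= (1 + alpha k) * phi k - alpha k * phi k.-1 + delta k - s k) ->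
  forall K, \sum_(k < K) s k <= D2 + \sum_(k < K) delta k.
Proof.
move=> hphi ha a01 anon hstep.
have inv : forall K, \sum_(k < K) s k + phi K - alpha K * phi K.-1
                     <= (1 - alpha K) * D2 + \sum_(k < K) delta k.
  elim=> [|K IH].
    rewrite !big_ord0 /=; have := hphi 0%N; have := ha 0%N; nra.
  rewrite !big_ord_recr /=.
  have := hstep K; have := hphi K; have := anon K; have := ha K.+1.
  nra.
move=> K; have := inv K; have := hphi K; have := hphi K.-1; have := ha K.
nra.
Qed.

Lemma wavg_id {R : realType} {n} (lam : nat -> R) (y : nat -> 'rV[R]_n) (c z : 'rV[R]_n) K :
  \sum_(j < K) lam j != 0 ->
  \sum_(j < K) lam j * dot c (y j - z) =
  (\sum_(j < K) lam j) * dot c ((\sum_(j < K) lam j)^-1 *: \sum_(j < K) lam j *: y j - z).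
Proof.
move=> L0.
rewrite dotDr dotNr dotZr (dot_sumr c K (fun j => lam j *: y j)) mulrDr mulrA mulfV // mul1r mulrN.
rewrite mulr_suml -sumrB; apply: eq_bigr => j _.
by rewrite dotDr dotNr dotZr mulrDr mulrN.
Qed.

Lemma lam_sum_ge {R : realType} (lam : nat -> R) (lo : R) K :
  (forall j, lo <= lam j) -> K%:R * lo <= \sum_(j < K) lam j.
Proof.
move=> h; elim: K => [|K IH]; first by rewrite big_ord0 mul0r.
rewrite big_ord_recr /= -natr1 mulrDl mul1r; apply: lerD => //.
Qed.

Lemma avg_in {R : realType} {n} (X : set 'rV[R]_n) (lam : nat -> R) (y : nat -> 'rV[R]_n) K :
  convex_subset X -> (forall j, X (y j)) -> (forall j, 0 < lam j) -> (1 <= K)%N ->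
  X ((\sum_(j < K) lam j)^-1 *: \sum_(j < K) lam j *: y j).
Proof.
move=> cX Xy lp; elim: K => [//|K IH] _.
case: K IH => [_|K IH].
  rewrite !big_ord1 scalerA mulVf ?scale1r //; exact: lt0r_neq0.
have A0 : 0 < \sum_(j < K.+1) lam j.
  by rewrite big_ord_recr /= ltr_wpDl // sumr_ge0 // => j _; apply: ltW.
have := cX _ _ (IH isT) (Xy K.+1) ((\sum_(j < K.+1) lam j) / (\sum_(j < K.+2) lam j)).
rewrite (big_ord_recr K.+1) [Z in _ -> X (_ *: Z)](big_ord_recr K.+1) /=.
move: A0 (lp K.+1); move: (\sum_(j < K.+1) lam j) (\sum_(j < K.+1) lam j *: y j) (lam K.+1) (y K.+1).
move=> A S a v A0 a0 h.
have Aa : 0 < A + a by rewrite addr_gt0.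
have -> : (A + a)^-1 *: (S + a *: v) = A / (A + a) *: (A^-1 *: S) + (1 - A / (A + a)) *: v.
  apply/rowP => i; rewrite !mxE; field.
  by apply/andP; split; apply: lt0r_neq0.
apply: h; apply/andP; split; first by rewrite divr_ge0 // ltW.
by rewrite ler_pdivrMr // mul1r lerDl ltW.
Qed.

Lemma sum_lin {R : realType} (l f : nat -> R) (p c : R) K :
  \sum_(k < K) (p * l k * f k - p * l k * c) =
  p * \sum_(k < K) l k * f k - p * c * \sum_(k < K) l k.
Proof.
elim: K => [|K IH]; first by rewrite !big_ord0; ring.
by rewrite !big_ord_recr /= IH; ring.
Qed.

Lemma fin_b {R : realType} (L K lo E d c : R) :
  0 < lo -> 0 < K -> K * lo <= L -> 0 <= E ->
  2 * L * d - 2 * c * L <= E -> d <= K^-1 * (E / (2 * lo)) + c.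
Proof.
move=> lo0 K0 KL E0 h.
have L0 : 0 < L by apply: lt_le_trans KL; rewrite mulr_gt0.
have -> : K^-1 * (E / (2 * lo)) = E / (2 * (K * lo)) by field; rewrite ?lt0r_neq0.
have h1 : d - c <= E / (2 * L) by rewrite ler_pdivlMr ?mulr_gt0 //; lra.
suff : E / (2 * L) <= E / (2 * (K * lo)) by lra.
apply: ler_wpM2l => //; rewrite lef_pV2 ?posrE ?mulr_gt0 //; lra.
Qed.

Lemma fin_a {R : realType} (L K lo eta E d : R) :
  0 < lo -> 0 < K -> 0 < eta -> K * lo <= L -> 0 <= E ->
  2 * eta * L * d <= E -> d <= K^-1 * (E / (2 * lo * eta)).
Proof.
move=> lo0 K0 e0 KL E0 h.
have L0 : 0 < L by apply: lt_le_trans KL; rewrite mulr_gt0.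
have -> : K^-1 * (E / (2 * lo * eta)) = E / (2 * eta * (K * lo)) by field; rewrite ?lt0r_neq0.
have h1 : d <= E / (2 * eta * L) by rewrite ler_pdivlMr ?mulr_gt0 //; lra.
apply: le_trans h1 _.
apply: ler_wpM2l => //; rewrite lef_pV2 ?posrE ?mulr_gt0 //.
by apply: ler_wpM2l => //; rewrite mulr_ge0 // ltW.
Qed.

Lemma powR_le_inv {R : realType} (a c M : R) :
  0 <= a -> 0 < M -> a `^ M <= c -> a <= c `^ (M^-1).
Proof.
move=> a0 M0 h.
have -> : a = (a `^ M) `^ (M^-1) by rewrite -powRrM mulfV ?lt0r_neq0 // powRr1.
apply: ge0_ler_powR => //; rewrite ?invr_ge0 ?ltW // nnegrE ?powR_ge0 //.
apply: le_trans h; exact: powR_ge0.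
Qed.

Lemma powR_div {R : realType} (b s r : R) :
  0 <= b -> 0 < s -> (b / s) `^ r = b `^ r / s `^ r.
Proof.
move=> b0 s0.
have si : 0 <= s^-1 by rewrite invr_ge0 ltW.
rewrite powRM //.
have sr : 0 < s `^ r by rewrite powR_gt0.
have h : s `^ r * s^-1 `^ r = 1.
  by rewrite -powRM ?(ltW s0) // divff ?lt0r_neq0 // powR1.
have e : s^-1 `^ r = (s `^ r)^-1.
  by apply: (mulfI (lt0r_neq0 sr)); rewrite h mulfV //; exact: lt0r_neq0.
by rewrite e.
Qed.


Theorem theorem3p12 (R : realType) (n : nat)
  (F H : 'rV[R]_n -> 'rV[R]_n) (DomF DomH X Omega : set 'rV[R]_n)
  (LF LH : R) (PX POmega : 'rV[R]_n -> 'rV[R]_n)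
  (alpha lambda : nat -> R) (eta lam_lo lam_hi : R)
  (x w w' y : nat -> 'rV[R]_n) :
  (* standing assumptions *)
  0 < LF -> 0 < LH ->
  monotone_map_on DomF F -> lipschitz_map_on DomF F LF ->
  monotone_map_on DomH H -> lipschitz_map_on DomH H LH ->
  X !=set0 -> compact X -> convex_subset X ->
  Omega !=set0 -> closed Omega -> convex_subset Omega ->
  X `<=` Omega -> Omega `<=` DomF `&` DomH ->
  is_projection X PX -> is_projection Omega POmega ->
  VIsol F X !=set0 ->
  (* IneIREG iterates; x_{-1} = x_0 is encoded as x (k.-1) with 0.-1 = 0 *)
  X (x 0) ->
  (forall k, w k = x k + alpha k *: (x k - x k.-1)) ->
  (forall k, w' k = POmega (w k)) ->
  (forall k, y k = PX (w k - lambda k *: (F (w' k) + eta *: H (w' k)))) ->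
  (forall k, x k.+1 = PX (w k - lambda k *: (F (y k) + eta *: H (y k)))) ->
  (* parameter assumptions *)
  0 < eta ->
  (forall k, 0 <= alpha k) -> alpha 0 <= 1 ->
  (forall k, alpha k.+1 <= alpha k) ->
  (forall k, lam_lo <= lambda k <= lam_hi) ->
  0 < lam_lo -> lam_lo <= lam_hi -> lam_hi <= 1 / (LF + eta * LH) ->
  let delta := fun k => alpha k * (1 + alpha k) * enorm (x k - x k.-1) ^+ 2 in
  cvgn (series delta) ->
  let s_hat := limn (series delta) in
  let Q := VIsol F X in
  let DX := set_diam X in
  let CH := sup_norm H X in
  let BH := sup_norm H Q in
  let Lam := fun k => \sum_(j < k) lambda j in
  let ybar := fun k => (Lam k)^-1 *: \sum_(j < k) lambda j *: y j in
  (* (a) *)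
  (forall k : nat, (1 <= k)%N ->
     - BH * set_dist (ybar k) Q <= Gap (ybar k) H Q /\
     Gap (ybar k) H Q <= k%:R^-1 * ((DX ^+ 2 + s_hat) / (2 * lam_lo * eta))) /\
  (* (b) *)
  (forall k : nat, (1 <= k)%N ->
     0 <= Gap (ybar k) F X /\
     Gap (ybar k) F X <= k%:R^-1 * ((DX ^+ 2 + s_hat) / (2 * lam_lo))
                         + eta * (lam_hi * CH * DX / lam_lo)) /\
  (* (c) *)
  (forall sigma M : R, 0 < sigma -> 1 <= M -> weakly_sharp F X Q sigma M ->
   forall k : nat, (1 <= k)%N ->
     - (BH / sigma `^ (M^-1)) *
       (k%:R^-1 * ((DX ^+ 2 + s_hat) / (2 * lam_lo))
        + eta * (lam_hi * CH * DX / lam_lo)) `^ (M^-1)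
     <= Gap (ybar k) H Q).
Proof.
move=> LF0 LH0 monF lipF monH lipH X0 cX cvX Om0 clOm cvOm XOm OmD hPX hPO Q0 Xx0
  hw hw' hy hx eta0 a0 a01 anon lamb lo0 lolehi hi1 delta cvd s_hat Q DX CH BH Lam ybar.
have XDF : forall v, X v -> DomF v by move=> v /XOm /OmD [].
have XDH : forall v, X v -> DomH v by move=> v /XOm /OmD [].
have Xx : forall k, X (x k).
  elim=> [//|k IH]; rewrite hx; by case: (hPX (w k - lambda k *: (F (y k) + eta *: H (y k)))).
have Xy : forall k, X (y k).
  move=> k; rewrite hy; by case: (hPX (w k - lambda k *: (F (w' k) + eta *: H (w' k)))).
have lamp : forall k, 0 < lambda k by move=> k; have := lamb k; case/andP => h _; apply: lt_le_trans h.
have DX0 : 0 <= DX by apply: diam_ge0.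
have diam : forall a b, X a -> X b -> enorm (a - b) <= DX by move=> a b; apply: diam_bound.
have [x0 Xx0'] := X0.
set cH := enorm (H x0) + LH * DX.
have Hb : forall v, X v -> enorm (H v) <= cH.
  move=> v Xv; have -> : H v = H x0 + (H v - H x0) by rewrite addrC subrK.
  apply: le_trans (enorm_triangle _ _) _; rewrite lerD2l.
  apply: le_trans (lipH _ _ (XDH _ Xv) (XDH _ Xx0')) _.
  by apply: ler_wpM2l; [apply: ltW | apply: diam].
have CHb : forall v, X v -> enorm (H v) <= CH by move=> v Xv; apply: (supnorm_bound H X cH v Hb Xv).
have CH0 : 0 <= CH by apply: (supnorm_ge0 H X cH Hb X0).
have QX : forall q, Q q -> X q by move=> q [].
have BHb : forall v, Q v -> enorm (H v) <= BH.
  by move=> v Qv; apply: (supnorm_bound H Q cH v (fun v Qv => Hb v (QX v Qv)) Qv).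
have BH0 : 0 <= BH by apply: (supnorm_ge0 H Q cH (fun v Qv => Hb v (QX v Qv)) Q0).
have OmF : forall v, Omega v -> DomF v by move=> v /OmD [].
have OmH : forall v, Omega v -> DomH v by move=> v /OmD [].
have LipG : forall k a b, Omega a -> Omega b ->
    lambda k ^+ 2 * dot ((F a + eta *: H a) - (F b + eta *: H b)) ((F a + eta *: H a) - (F b + eta *: H b))
    <= dot (a - b) (a - b).
  move=> k a b Oa Ob.
  have e1 : enorm ((F a + eta *: H a) - (F b + eta *: H b)) <= (LF + eta * LH) * enorm (a - b).
    have -> : (F a + eta *: H a) - (F b + eta *: H b) = (F a - F b) + eta *: (H a - H b).
      by apply/rowP => i; rewrite !mxE; ring.
    apply: le_trans (enorm_triangle _ _) _; rewrite enormZ ger0_norm ?(ltW eta0) // mulrDl.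
    apply: lerD; first exact: lipF (OmF _ Oa) (OmF _ Ob).
    rewrite -mulrA; apply: ler_wpM2l; first exact: ltW.
    exact: lipH (OmH _ Oa) (OmH _ Ob).
  have Lp : 0 < LF + eta * LH by rewrite addr_gt0 // mulr_gt0.
  have lL : lambda k * (LF + eta * LH) <= 1.
    have := lamb k; case/andP => _ h.
    have := le_trans h hi1; rewrite ler_pdivlMr // mul1r.
  have e2 : lambda k * enorm ((F a + eta *: H a) - (F b + eta *: H b)) <= enorm (a - b).
    apply: le_trans (ler_wpM2l (ltW (lamp k)) e1) _.
    rewrite mulrA; have := enorm_ge0 (a - b); nra.
  rewrite -!enorm_sq -exprMn; apply: lerXn2r => //; rewrite nnegrE ?mulr_ge0 ?enorm_ge0 ?(ltW (lamp k)) //.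
have step : forall k z, X z ->
    dot (x k.+1 - z) (x k.+1 - z) <= dot (w k - z) (w k - z)
      - 2 * lambda k * dot (F (y k) + eta *: H (y k)) (y k - z).
  move=> k z Xz.
  have := eg_step X Omega PX POmega (fun v => F v + eta *: H v) (lambda k) (w k) z
    hPX cvX hPO cvOm XOm (LipG k) Xz.
  cbv beta; rewrite -hw' -hy -hx; exact.
have phib : forall k z, X z -> 0 <= dot (x k - z) (x k - z) <= DX ^+ 2.
  move=> k z Xz; rewrite dot_ge0 /=; apply: enorm_sqle => //; exact: diam.
have del0 : forall k, 0 <= delta k.
  move=> k; rewrite /delta; apply: mulr_ge0; last exact: sqr_ge0.
  by apply: mulr_ge0 => //; apply: addr_ge0.
have dsum : forall K, \sum_(k < K) delta k <= s_hat.
  have hom : {homo series delta : p q / (p <= q)%N >-> p <= q}.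
    by move=> p q pq; apply: nondecreasing_series.
  move=> K; have := nondecreasing_cvgn_le hom cvd K.
  move=> h; apply: le_trans h; by rewrite seriesEord.
have shat0 : 0 <= s_hat by have := dsum 0%N; rewrite big_ord0.
have sumb : forall z, X z -> forall K,
    \sum_(k < K) 2 * lambda k * dot (F (y k) + eta *: H (y k)) (y k - z) <= DX ^+ 2 + s_hat.
  move=> z Xz K; apply: (le_trans (y := DX ^+ 2 + \sum_(k < K) delta k)); last by rewrite lerD2l dsum.
  apply: (sum_bound (fun k => dot (x k - z) (x k - z)) alpha delta (fun k => 2 * lambda k * dot (F (y k) + eta *: H (y k)) (y k - z)) (DX ^+ 2)) => //.
  - by move=> k; apply: phib.
  - move=> k; apply: le_trans (step k z Xz) _.
    rewrite hw inertial_id /delta enorm_sq; lra.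
have ybX : forall K, (1 <= K)%N -> X (ybar K) by move=> K K1; apply: (avg_in X lambda y K).
have LamK : forall K, K%:R * lam_lo <= Lam K.
  by move=> K; apply: lam_sum_ge => j; case/andP: (lamb j).
have Kp : forall K, (1 <= K)%N -> 0 < K%:R :> R by move=> K K1; rewrite ltr0n.
have Lam0 : forall K, (1 <= K)%N -> Lam K != 0.
  move=> K K1; apply: lt0r_neq0; apply: lt_le_trans (LamK K); rewrite mulr_gt0 //; exact: Kp.
have E0 : 0 <= DX ^+ 2 + s_hat by rewrite addr_ge0 // sqr_ge0.
have hihi : CH * DX <= lam_hi * CH * DX / lam_lo.
  rewrite ler_pdivlMr //; have := mulr_ge0 CH0 DX0; nra.
have boundF : forall K, (1 <= K)%N -> forall z, X z ->
    dot (F z) (ybar K - z) <= K%:R^-1 * ((DX ^+ 2 + s_hat) / (2 * lam_lo))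
                         + eta * (lam_hi * CH * DX / lam_lo).
  move=> K K1 z Xz.
  have h1 : \sum_(k < K) (2 * lambda k * dot (F z) (y k - z) - 2 * lambda k * (eta * (CH * DX)))
            <= DX ^+ 2 + s_hat.
    apply: le_trans (sumb z Xz K); apply: ler_sum => k _.
    rewrite dotDl dotZl.
    have m1 := monF (y k) z (XDF _ (Xy k)) (XDF _ Xz).
    rewrite dotDl dotNl in m1.
    have c1 := CSN (H (y k)) (y k - z).
    have c2 : enorm (H (y k)) * enorm (y k - z) <= CH * DX.
      by apply: ler_pM; rewrite ?enorm_ge0 ?CHb ?diam.
    have c3 : - (eta * (CH * DX)) <= eta * dot (H (y k)) (y k - z).
      rewrite -mulrN; apply: ler_wpM2l; [exact: ltW | lra].
    have := lamp k; nra.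
  rewrite (sum_lin lambda (fun k => dot (F z) (y k - z)) 2 (eta * (CH * DX)) K) (wavg_id lambda y (F z) z K (Lam0 K K1)) in h1.
  have h2 : 2 * Lam K * dot (F z) (ybar K - z) - 2 * (eta * (CH * DX)) * Lam K
            <= DX ^+ 2 + s_hat by rewrite -(mulrA 2); exact: h1.
  have h3 := fin_b _ _ _ _ _ _ lo0 (Kp K K1) (LamK K) E0 h2.
  apply: le_trans h3 _.
  by rewrite lerD2l; apply: ler_wpM2l => //; apply: ltW.
have boundH : forall K, (1 <= K)%N -> forall q, Q q ->
    dot (H q) (ybar K - q) <= K%:R^-1 * ((DX ^+ 2 + s_hat) / (2 * lam_lo * eta)).
  move=> K K1 q Qq; have [Xq hq] := Qq.
  have h1 : \sum_(k < K) (2 * eta * lambda k * dot (H q) (y k - q) - 2 * eta * lambda k * 0)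
            <= DX ^+ 2 + s_hat.
    apply: le_trans (sumb q Xq K); apply: ler_sum => k _.
    rewrite dotDl dotZl.
    have m1 := monF (y k) q (XDF _ (Xy k)) (XDF _ Xq).
    have m2 := monH (y k) q (XDH _ (Xy k)) (XDH _ Xq).
    rewrite dotDl dotNl in m1; rewrite dotDl dotNl in m2.
    have h0 := hq _ (Xy k).
    move: m1 m2 h0; set dF := dot (F (y k)) _; set dFq := dot (F q) _; set dH := dot (H (y k)) _;
      set a := dot (H q) _ => m1 m2 h0.
    rewrite mulr0 subr0 -subr_ge0.
    have -> : 2 * lambda k * (dF + eta * dH) - 2 * eta * lambda k * a
              = 2 * lambda k * (dF + eta * (dH - a)) by ring.
    apply: mulr_ge0; first by rewrite mulr_ge0 // ltW.
    apply: addr_ge0; first lra.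
    apply: mulr_ge0; [exact: ltW | lra].
  rewrite (sum_lin lambda (fun k => dot (H q) (y k - q)) (2 * eta) 0 K) (wavg_id lambda y (H q) q K (Lam0 K K1)) in h1.
  rewrite mulr0 mul0r subr0 in h1.
  have h2 : 2 * eta * Lam K * dot (H q) (ybar K - q) <= DX ^+ 2 + s_hat
    by rewrite -(mulrA (2 * eta)); exact: h1.
  exact: (fin_a _ _ _ _ _ _ lo0 (Kp K K1) eta0 (LamK K) E0 h2).
have partA : forall K, (1 <= K)%N ->
    - BH * set_dist (ybar K) Q <= Gap (ybar K) H Q /\
    Gap (ybar K) H Q <= K%:R^-1 * ((DX ^+ 2 + s_hat) / (2 * lam_lo * eta)).
  move=> K K1.
  have up : forall v, [set dot (H x) (ybar K - x) | x in Q] v ->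
      v <= K%:R^-1 * ((DX ^+ 2 + s_hat) / (2 * lam_lo * eta)).
    by move=> _ [q Qq <-]; apply: boundH.
  split.
  - apply: dist_lb => // q Qq.
    have e1 : dot (H q) (ybar K - q) <= Gap (ybar K) H Q.
      by apply: (sup_ge_elt _ _ _ up); exists q.
    have e2 := CSN (H q) (ybar K - q).
    have := BHb q Qq; have := enorm_ge0 (ybar K - q); have := enorm_ge0 (H q); nra.
  - apply: (sup_le_b _ _ _ up); have [q Qq] := Q0.
    by exists (dot (H q) (ybar K - q)); exists q.
have partB : forall K, (1 <= K)%N ->
    0 <= Gap (ybar K) F X /\
    Gap (ybar K) F X <= K%:R^-1 * ((DX ^+ 2 + s_hat) / (2 * lam_lo))
                        + eta * (lam_hi * CH * DX / lam_lo).
  move=> K K1.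
  have up : forall v, [set dot (F x) (ybar K - x) | x in X] v ->
      v <= K%:R^-1 * ((DX ^+ 2 + s_hat) / (2 * lam_lo)) + eta * (lam_hi * CH * DX / lam_lo).
    by move=> _ [z Xz <-]; apply: boundF.
  split.
  - apply: (sup_ge_elt _ _ _ up); exists (ybar K); first exact: ybX.
    by rewrite subrr dot0r.
  - apply: (sup_le_b _ _ _ up).
    by exists (dot (F (ybar K)) (ybar K - ybar K)); exists (ybar K); first exact: ybX.
split; first exact: partA.
split; first exact: partB.
move=> sigma M s0 M1 ws K K1.
set Bb := K%:R^-1 * ((DX ^+ 2 + s_hat) / (2 * lam_lo)) + eta * (lam_hi * CH * DX / lam_lo).
have Bb0 : 0 <= Bb.
  have hi0 : 0 <= lam_hi by apply: le_trans (ltW lo0) lolehi.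
  rewrite /Bb; apply: addr_ge0.
    apply: mulr_ge0; first by rewrite invr_ge0 ler0n.
    by apply: divr_ge0 => //; apply: mulr_ge0 => //; apply: ltW.
  apply: mulr_ge0; first exact: ltW.
  apply: divr_ge0; last exact: ltW.
  by apply: mulr_ge0 => //; apply: mulr_ge0.
have [q Qq] := Q0.
have w1 := ws q (ybar K) Qq (ybX K K1).
have w2 := boundF K K1 q (QX q Qq).
have d0 : 0 <= set_dist (ybar K) Q by apply: dist_ge0.
have M0 : 0 < M by apply: lt_le_trans M1.
have w3 : set_dist (ybar K) Q `^ M <= Bb / sigma.
  rewrite ler_pdivlMr // mulrC; exact: le_trans w1 w2.
have w4 := powR_le_inv _ _ _ d0 M0 w3.
rewrite powR_div // in w4.
have [a1 _] := partA K K1.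
apply: le_trans a1.
rewrite mulNr mulNr lerN2 mulrAC -mulrA; apply: ler_wpM2l => //.
Qed.
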